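(* Let $d>0$, $K_z>0$, $K_x>0$, $k>0$, $\sigma>0$, $l>0$, $\rho\ge0$, let $S:\mathbb{R}\to\mathbb{R}$ be a smooth odd saturating function with $S(0)=0$, $S'(0)=1$, let $\eta(z)=\exp(-z^2/(2\sigma^2))$, and consider the scalar equilibrium bifurcation problem $$g(z,d,u,b,K_x,K_z,k,\sigma,\rho,l) := (1-\eta(z))\,K_x\!\left(\frac{\rho}{l}\tanh(kz) - z - \frac{dz-uS(z)+b}{K_z\eta(z)}\right) - \frac{dz-uS(z)+b}{K_z} = 0$$ with $b$ as bifurcation parameter, $u>d$ close to $d$, and its two saddle-node bifurcation points $(z_1^*,b_1^* )$ with $z_1^*>0>b_1^*$ and $(z_2^*,b_2^* )$ with $z_2^*<0<b_2^*$. Then varying $u$ changes the size of the bistable region (the interval $(b_1^*,b_2^* )$ of $b$ values) by moving these saddle points: $\partial b_1^*/\partial u<0$ and $\partial b_2^*/\partial u>0$, so larger $u$ gives a larger bistable region (a larger input $|b|$ is required for switching) and smaller $u$ gives a smaller bistable region (a smaller input is required for switching).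
   Context: Zeros of $g$ correspond to equilibria of the opinion–position system $\dot z=-dz+uS(z)+b-K_z\eta(z)(z-x)$, $\dot x=(1-\eta(z))K_x(\frac{\rho}{l}\tanh(kz)-x)-\eta(z)(x-z)$, where $z$ is an agent's opinion between two tasks, $x$ its position, $u$ an attention gain and $b$ a bias; ''switching'' means the opinion changing sign when $b$ crosses a saddle-node value. *)

(* Defs.v *)
From Stdlib Require Import Reals Lra.
From Coquelicot Require Import Coquelicot.
Open Scope R_scope.

(* "S is a smooth odd saturating function with S(0)=0, S'(0)=1":
   smooth = derivatives of every order exist everywhere; odd;
   saturating = bounded and strictly increasing (S' > 0). *)
Definition saturating_sigmoid (S : R -> R) : Prop :=
  (forall n x, ex_derive_n S n x) /\
  (forall x, S (- x) = - S x) /\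
  S 0 = 0 /\
  Derive S 0 = 1 /\
  (forall x, 0 < Derive S x) /\
  (exists M, forall x, Rabs (S x) <= M).

Definition eta (sigma z : R) : R := exp (- (z ^ 2) / (2 * sigma ^ 2)).

Definition g (S : R -> R) (z d u b Kx Kz k sigma rho l : R) : R :=
  (1 - eta sigma z) * Kx *
    (rho / l * tanh (k * z) - z - (d * z - u * S z - b) / (Kz * eta sigma z))
  - (d * z - u * S z - b) / Kz.

Definition saddle_node (S : R -> R) (d u Kx Kz k sigma rho l : R) (z b : R) : Prop :=
  g S z d u b Kx Kz k sigma rho l = 0 /\
  Derive_n (fun w => g S w d u b Kx Kz k sigma rho l) 1 z = 0 /\
  Derive_n (fun w => g S w d u b Kx Kz k sigma rho l) 2 z <> 0 /\
  Derive (fun c => g S z d u c Kx Kz k sigma rho l) b <> 0.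

(* Main.v *)
Require Import Defs.
From Stdlib Require Import Reals Lra.
From Coquelicot Require Import Coquelicot.
Open Scope R_scope.

Lemma eta_pos s z : 0 < eta s z.
Proof. unfold eta; apply exp_pos. Qed.

Lemma eta_le1 s z : 0 < s -> eta s z <= 1.
Proof.
  intros Hs. unfold eta. rewrite <- exp_0.
  destruct (Req_dec (- z ^ 2 / (2 * s ^ 2)) 0) as [E|E]; [rewrite E; lra|].
  left. apply exp_increasing.
  assert (0 < 2 * s ^ 2) by (simpl; nra).
  assert (0 <= z ^ 2) by (simpl; nra).
  unfold Rdiv. assert (0 <= z^2 * / (2 * s^2)).
  { apply Rmult_le_pos; [lra| left; apply Rinv_0_lt_compat; lra]. }
  unfold Rdiv in E. lra.
Qed.

Lemma exG (S : R -> R) d u b Kx Kz k sigma rho l z :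
  (forall x, ex_derive S x) -> 0 < Kz ->
  ex_derive (fun w => g S w d u b Kx Kz k sigma rho l) z.
Proof.
  intros HS HKz. unfold g, eta, tanh, sinh, cosh.
  auto_derive. repeat split; auto.
  - pose proof (exp_pos (k*z)); pose proof (exp_pos (-(k*z))); lra.
  - apply Rgt_not_eq, Rmult_lt_0_compat; [lra| apply exp_pos].
Qed.

Lemma S_strict (S : R -> R) : saturating_sigmoid S -> forall a b, a < b -> S a < S b.
Proof.
  intros [Hn [_ [_ [_ [Hp _]]]]] a b Hab.
  assert (HS : forall x, ex_derive S x) by (intro x; exact (Hn 1%nat x)).
  destruct (MVT_gen S a b (Derive S)) as [c [_ Hc]].
  - intros x _. apply Derive_correct, HS.
  - intros x _. apply continuity_pt_filterlim. apply (@ex_derive_continuous R_AbsRing R_NormedModule S x), HS.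
  - pose proof (Hp c). nra.
Qed.

Lemma branch (S : R -> R) (d Kz Kx k sigma l rho : R) (z b : R -> R) u0 :
  0 < Kz -> 0 < Kx -> 0 < sigma -> 0 < l ->
  saturating_sigmoid S -> ex_derive z u0 -> ex_derive b u0 ->
  (exists eps : R, 0 < eps /\
            forall u, Rabs (u - u0) < eps ->
              saddle_node S d u Kx Kz k sigma rho l (z u) (b u)) ->
  Derive b u0 = - S (z u0).
Proof.
  intros HKz HKx Hs Hl HSS Hz Hb [eps [Heps Hsn]].
  assert (HS : forall x, ex_derive S x).
  { destruct HSS as [Hn _]. intro x; exact (Hn 1%nat x). }
  set (z0 := z u0). set (b0 := b u0).
  set (C := fun w => (1 - eta sigma w) * Kx / (Kz * eta sigma w) + 1 / Kz).
  set (G0 := fun w => g S w d u0 b0 Kx Kz k sigma rho l).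
  set (P := fun u => (u - u0) * S (z u) + (b u - b0)).
  set (h := fun u => G0 (z u) + P u * C (z u)).
  assert (Hid : forall u, g S (z u) d u (b u) Kx Kz k sigma rho l = h u).
  { intro u. unfold h, G0, P, C, g. pose proof (eta_pos sigma (z u)). field. repeat split; apply Rgt_not_eq; lra. }
  assert (HG : is_derive G0 z0 0).
  { destruct (Hsn u0) as [_ [H1 _]]. { rewrite Rminus_eq_0, Rabs_R0; lra. }
    simpl in H1. rewrite <- H1. apply Derive_correct. apply exG; auto. }
  assert (HC : ex_derive C z0).
  { unfold C, eta. auto_derive. repeat split.
    apply Rgt_not_eq, Rmult_lt_0_compat; [lra| apply exp_pos]. }
  assert (Hh : is_derive h u0 (Derive z u0 * 0 + ((1 * S z0 + (u0 - u0) * (Derive z u0 * Derive S z0) + Derive b u0) * C z0 + P u0 * (Derive z u0 * Derive C z0)))).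
  { unfold h. apply (is_derive_plus (V:=R_NormedModule)).
    - exact (is_derive_comp G0 z u0 0 _ HG (Derive_correct _ _ Hz)).
    - assert (HSz := is_derive_comp S z u0 _ _ (Derive_correct S z0 (HS z0)) (Derive_correct _ _ Hz)).
      assert (HCz := is_derive_comp C z u0 _ _ (Derive_correct C z0 HC) (Derive_correct _ _ Hz)).
      assert (Hu : is_derive (fun u:R => u - u0) u0 1) by (auto_derive; auto; ring).
      assert (Hbb : is_derive (fun u:R => b u - b0) u0 (Derive b u0)).
      { assert (H2 := is_derive_minus b (fun _ => b0) u0 _ _ (Derive_correct _ _ Hb) (is_derive_const b0 u0)).
        replace (Derive b u0) with (Derive b u0 - 0) by ring. exact H2. }
      exact (is_derive_mult P (fun x => C (z x)) u0 _ _ (is_derive_plus _ _ u0 _ _ (is_derive_mult _ _ u0 _ _ Hu HSz Rmult_comm) Hbb) HCz Rmult_comm). }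
  assert (Hh0 : is_derive h u0 0).
  { apply is_derive_ext_loc with (f := fun _ => 0).
    - exists (mkposreal eps Heps). intros y Hy. rewrite <- Hid.
      destruct (Hsn y) as [H _]; [exact Hy| symmetry; exact H].
    - auto_derive; auto. }
  apply is_derive_unique in Hh. apply is_derive_unique in Hh0. rewrite Hh0 in Hh.
  assert (P u0 = 0) by (unfold P, b0; ring).
  assert (0 < C z0).
  { unfold C. pose proof (eta_pos sigma z0). pose proof (eta_le1 sigma z0 Hs).
    assert (0 <= (1 - eta sigma z0) * Kx / (Kz * eta sigma z0)).
    { unfold Rdiv. apply Rmult_le_pos; [nra| left; apply Rinv_0_lt_compat; nra]. }
    assert (0 < 1 / Kz) by (unfold Rdiv; rewrite Rmult_1_l; apply Rinv_0_lt_compat; lra).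
    lra. }
  rewrite H in Hh. fold z0. nra.
Qed.
Theorem theorem2 (S : R -> R) (d Kz Kx k sigma l rho : R) :
  0 < d -> 0 < Kz -> 0 < Kx -> 0 < k -> 0 < sigma -> 0 < l -> 0 <= rho ->
  saturating_sigmoid S ->
  exists delta : R, 0 < delta /\
    forall u0 : R, d < u0 < d + delta ->
      (forall (z1 b1 : R -> R),
         ex_derive z1 u0 -> ex_derive b1 u0 ->
         (exists eps : R, 0 < eps /\
            forall u, Rabs (u - u0) < eps ->
              saddle_node S d u Kx Kz k sigma rho l (z1 u) (b1 u) /\
              0 < z1 u /\ b1 u < 0) ->
         Derive b1 u0 < 0) /\
      (forall (z2 b2 : R -> R),
         ex_derive z2 u0 -> ex_derive b2 u0 ->
         (exists eps : R, 0 < eps /\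
            forall u, Rabs (u - u0) < eps ->
              saddle_node S d u Kx Kz k sigma rho l (z2 u) (b2 u) /\
              z2 u < 0 /\ 0 < b2 u) ->
         0 < Derive b2 u0).
Proof.
  intros Hd HKz HKx Hk Hs Hl Hrho HSS. exists 1. split; [lra|]. intros u0 Hu0. split.
  - intros z1 b1 Hz Hb [eps [Heps H]].
    rewrite (branch S d Kz Kx k sigma l rho z1 b1 u0); auto.
    + destruct (H u0) as [_ [Hp _]]. { rewrite Rminus_eq_0, Rabs_R0; lra. }
      pose proof (S_strict S HSS 0 (z1 u0) Hp). destruct HSS as [_ [_ [HS0 _]]]. lra.
    + exists eps. split; auto. intros u Hu. apply H; auto.
  - intros z2 b2 Hz Hb [eps [Heps H]].
    rewrite (branch S d Kz Kx k sigma l rho z2 b2 u0); auto.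
    + destruct (H u0) as [_ [Hp _]]. { rewrite Rminus_eq_0, Rabs_R0; lra. }
      pose proof (S_strict S HSS (z2 u0) 0 Hp). destruct HSS as [_ [_ [HS0 _]]]. lra.
    + exists eps. split; auto. intros u Hu. apply H; auto.
Qed.
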